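(* Let $v$ be a vertex of a graph $G$ and let $H$ be a subgraph of $G$ containing $v$ and containing at least one vertex from each connected component of $G-v$. Then any $k$ level-disjoint partitions of $H$ rooted in $v$ can be extended to $k$ level-disjoint partitions of $G$ rooted in $v$ (i.e., there exist $k$ $v$-rooted level-disjoint partitions of $G$ whose restrictions to $V(H)$ are the given ones, levelwise).
   Context: All graphs are simple and undirected; $G$ is connected. For $S\subseteq V(G)$, $N(S)$ denotes the set of vertices adjacent to some vertex of $S$. A level partition of a graph $G$ is a tuple $\mathcal{S}=(S_0,\dots,S_h)$ of pairwise disjoint sets (levels) with union $V(G)$ such that $S_i\subseteq N(S_{i-1})$ for every $1\le i\le h$ (neighborhoods taken in that graph); $h=h(\mathcal{S})$ is its height. It is rooted in $v$ if $S_0=\{v\}$. Two level partitions $\mathcal{S},\mathcal{T}$ are level-disjoint if $S_i\cap T_i=\emptyset$ for every $1\le i\le\min(h(\mathcal{S}),h(\mathcal{T}))$; $k$ level partitions are level-disjoint partitions if they are pairwise level-disjoint. $G-v$ denotes $G$ with $v$ and its incident edges removed. *)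

(* Defs.v *)
From mathcomp Require Import all_boot.
Set Implicit Arguments. Unset Strict Implicit. Unset Printing Implicit Defensive.

Definition simple_graph (T : finType) (e : rel T) : Prop :=
  symmetric e /\ irreflexive e.

Definition connected_graph (T : finType) (e : rel T) : Prop :=
  forall x y : T, connect e x y.

Definition nbh (T : finType) (e : rel T) (S : {set T}) : {set T} :=
  [set y | [exists x in S, e x y]].

(* G - v : edge relation with v removed (vertex v becomes isolated and is
   never used as a path vertex). *)
Definition del_vertex (T : finType) (e : rel T) (v : T) : rel T :=
  [rel a b | [&& e a b, a != v & b != v]].

(* A level partition (S_0,...,S_h) is encoded as the list [S_0; ...; S_h];
   its height is size - 1.  Levels of the graph with vertex set V, edges e. *)
Definition level_partition (T : finType) (V : {set T}) (e : rel T)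
  (L : seq {set T}) : Prop :=
  [/\ (forall i j, i < size L -> j < size L -> i != j ->
         [disjoint nth set0 L i & nth set0 L j]),
      \bigcup_(S <- L) S = V
    & (forall i, 0 < i < size L -> nth set0 L i \subset nbh e (nth set0 L i.-1))].

Definition rooted_in (T : finType) (v : T) (L : seq {set T}) : Prop :=
  0 < size L /\ nth set0 L 0 = [set v].

Definition level_disjoint (T : finType) (L M : seq {set T}) : Prop :=
  forall i, 0 < i -> i < size L -> i < size M ->
    [disjoint nth set0 L i & nth set0 M i].

Definition level_disjoint_family (T : finType) (k : nat)
  (P : 'I_k -> seq {set T}) : Prop :=
  forall j1 j2 : 'I_k, j1 != j2 -> level_disjoint (P j1) (P j2).

(* Main.v *)
Require Import Defs.
From mathcomp Require Import all_boot.
Set Implicit Arguments. Unset Strict Implicit.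

Lemma mem_bigcup_nth (T : finType) (L : seq {set T}) z :
  z \in \bigcup_(S <- L) S <-> exists i, z \in nth set0 L i.
Proof.
elim: L => [|S L IH].
  rewrite big_nil in_set0; split=> // [[i]]; by rewrite nth_nil in_set0.
rewrite big_cons in_setU; split.
- case/orP=> [zS|/IH [i zi]]; [by exists 0 | by exists i.+1].
- by case=> [[|i]] /= zi; [rewrite zi | apply/orP; right; apply/IH; exists i].
Qed.

Lemma lp_mem (T : finType) (W : {set T}) e L z :
  level_partition W e L -> (z \in W <-> exists i, z \in nth set0 L i).
Proof. by case=> _ <- _; apply: mem_bigcup_nth. Qed.

Lemma nth_size (T : finType) (L : seq {set T}) i z :
  z \in nth set0 L i -> i < size L.
Proof.
move=> h; rewrite ltnNge; apply/negP=> h'; move: h; by rewrite nth_default // in_set0.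
Qed.

Lemma lp_disj (T : finType) (W : {set T}) e L i1 i2 z :
  level_partition W e L -> i1 != i2 -> z \in nth set0 L i1 ->
  z \in nth set0 L i2 -> False.
Proof.
case=> D _ _ ne z1 z2.
have := disjointFr (D _ _ (nth_size z1) (nth_size z2) ne) z1.
by rewrite z2.
Qed.

Lemma lp_nbh (T : finType) (W : {set T}) e L i :
  level_partition W e L -> 0 < i ->
  nth set0 L i \subset nbh e (nth set0 L i.-1).
Proof.
case=> _ _ N i0; case: (ltnP i (size L)) => h; first by apply: N; rewrite i0 h.
by rewrite nth_default // sub0set.
Qed.

Lemma mk_lp (T : finType) (W : {set T}) e (L : seq {set T}) :
  (forall i1 i2 z, i1 != i2 -> z \in nth set0 L i1 -> z \in nth set0 L i2 -> False) ->
  (forall z, z \in W <-> exists i, z \in nth set0 L i) ->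
  (forall i, 0 < i -> nth set0 L i \subset nbh e (nth set0 L i.-1)) ->
  level_partition W e L.
Proof.
move=> D M N; split.
- move=> i1 i2 _ _ ne; rewrite disjoints_subset; apply/subsetP=> z z1.
  rewrite in_setC; apply/negP=> z2; exact: (D _ _ _ ne z1 z2).
- apply/setP=> z; apply/idP/idP => h.
    by apply/M/mem_bigcup_nth.
  by apply/mem_bigcup_nth/M.
- by move=> i /andP[i0 _]; apply: N.
Qed.

Lemma mk_ld (T : finType) (L M : seq {set T}) :
  (forall i z, 0 < i -> z \in nth set0 L i -> z \in nth set0 M i -> False) ->
  level_disjoint L M.
Proof.
move=> D i i0 _ _; rewrite disjoints_subset; apply/subsetP=> z z1.
rewrite in_setC; apply/negP=> z2; exact: (D _ _ i0 z1 z2).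
Qed.

Lemma ld_use (T : finType) (L M : seq {set T}) i z :
  level_disjoint L M -> 0 < i -> z \in nth set0 L i -> z \in nth set0 M i -> False.
Proof.
move=> D i0 z1 z2.
have := disjointFr (D _ i0 (nth_size z1) (nth_size z2)) z1.
by rewrite z2.
Qed.

Definition inv (T : finType) (e : rel T) (v : T) (VH : {set T}) k
  (P : 'I_k -> seq {set T}) (W : {set T}) (Q : 'I_k -> seq {set T}) : Prop :=
  [/\ VH \subset W,
      (forall j, level_partition W e (Q j) /\ rooted_in v (Q j)),
      level_disjoint_family Q
    & (forall j i, nth set0 (Q j) i :&: VH = nth set0 (P j) i)].

Lemma step (T : finType) (e : rel T) (v : T) (VH W : {set T}) k
  (P Q : 'I_k -> seq {set T}) x y :
  symmetric e -> x \notin W -> y \in W -> y != v -> e y x ->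
  inv e v VH P W Q -> exists Q', inv e v VH P (x |: W) Q'.
Proof.
move=> se xW yW yv eyx [sVW LP LD R].
have lev j : {i | i < size (Q j) & y \in nth set0 (Q j) i}.
  apply: sig2W; have [i yi] := (lp_mem y (LP j).1).1 yW.
  by exists i => //; apply: nth_size yi.
pose l j := (s2val (lev j)).+1.
pose Q' j := set_nth set0 (Q j) (l j) (x |: nth set0 (Q j) (l j)).
have nQ' j i : nth set0 (Q' j) i =
    if i == l j then x |: nth set0 (Q j) i else nth set0 (Q j) i.
  by rewrite nth_set_nth /=; case: eqP => // ->.
have xQ j i : x \notin nth set0 (Q j) i.
  by apply/negP=> h; apply: (negP xW); apply/(lp_mem _ (LP j).1); exists i.
have yl j : y \in nth set0 (Q j) (l j).-1 by rewrite /l /=; case: (lev j).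
have lsz j : l j <= size (Q j) by rewrite /l; case: (lev j).
have lpos j : 0 < (l j).-1.
  have := yl j; rewrite lt0n; case: eqP => // ->.
  by case: (LP j) => _ [_ ->]; rewrite in_set1 (negbTE yv).
have ldist j1 j2 : j1 != j2 -> l j1 != l j2.
  move=> ne; apply/negP=> /eqP el.
  apply: (ld_use (LD _ _ ne) (lpos j1) (yl j1)); by rewrite el yl.

exists Q'; split.
- by apply: subset_trans sVW (subsetUr _ _).
- move=> j; have [lpj [s0 n0]] := LP j; split.
  + apply: mk_lp.
    * move=> i1 i2 z ne; rewrite !nQ'.
      case: eqP => [e1|_]; case: eqP => [e2|_].
      - by move: ne; rewrite e1 e2 eqxx.
      - case/setU1P=> [->|z1] z2; first by rewrite (negbTE (xQ _ _)) in z2.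
        exact: (lp_disj lpj ne z1 z2).
      - move=> z1 /setU1P [zx|z2]; first by rewrite zx (negbTE (xQ _ _)) in z1.
        exact: (lp_disj lpj ne z1 z2).
      - exact: lp_disj lpj ne.
    * move=> z; rewrite in_setU1; split.
      - case/orP=> [/eqP->|/(lp_mem _ lpj) [i zi]].
          by exists (l j); rewrite nQ' eqxx setU11.
        by exists i; rewrite nQ'; case: eqP => _ //; rewrite in_setU1 zi orbT.
      - case=> i; rewrite nQ'; case: eqP => _.
          case/setU1P=> [->|zi]; first by rewrite eqxx.
          by apply/orP; right; apply/(lp_mem _ lpj); exists i.
        by move=> zi; apply/orP; right; apply/(lp_mem _ lpj); exists i.
    * move=> i i0; rewrite !nQ'.
      have mono (A B : {set T}) : A \subset B -> nbh e A \subset nbh e B.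
        move=> AB; apply/subsetP=> z; rewrite !inE => /existsP [w /andP [wA ew]].
        by apply/existsP; exists w; rewrite ew andbT (subsetP AB).
      have hb : nbh e (nth set0 (Q j) i.-1) \subset
                nbh e (if i.-1 == l j then x |: nth set0 (Q j) i.-1
                       else nth set0 (Q j) i.-1).
        by apply: mono; case: eqP => _ //; apply: subsetUr.
      case: eqP => [il|_]; last exact: subset_trans (lp_nbh lpj i0) hb.
      rewrite subUset; apply/andP; split; last exact: subset_trans (lp_nbh lpj i0) hb.
      rewrite sub1set; apply: (subsetP hb); rewrite inE; apply/existsP; exists y.
      by rewrite il yl eyx.
  + split; first by rewrite size_set_nth leq_max s0 orbT.
    rewrite nQ'; suff -> : (0 == l j) = false by [].
    by [].
- move=> j1 j2 ne; apply: mk_ld => i z i0; rewrite !nQ'.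
  case: eqP => [e1|_]; case: eqP => [e2|_].
  + by move: (ldist _ _ ne); rewrite -e1 -e2 eqxx.
  + case/setU1P=> [->|z1] z2; first by rewrite (negbTE (xQ _ _)) in z2.
    exact: (ld_use (LD _ _ ne) i0 z1 z2).
  + move=> z1 /setU1P [zx|z2]; first by rewrite zx (negbTE (xQ _ _)) in z1.
    exact: (ld_use (LD _ _ ne) i0 z1 z2).
  + exact: (ld_use (LD _ _ ne) i0).
- move=> j i; rewrite nQ' -R; case: eqP => _ //.
  rewrite setIUl; suff -> : [set x] :&: VH = set0 by rewrite set0U.
  apply/setP=> z; rewrite !inE; apply/negP=> /andP [/eqP -> xV].
  by apply: (negP xW); apply: (subsetP sVW).
Qed.
Unset Implicit Arguments.

Theorem lemma2 (T : finType) (e : rel T) (v : T)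
  (VH : {set T}) (eH : rel T) (k : nat) (P : 'I_k -> seq {set T}) :
  simple_graph e -> connected_graph e ->
  (* H is a subgraph of G *)
  symmetric eH ->
  (forall x y, eH x y -> [&& e x y, x \in VH & y \in VH]) ->
  v \in VH ->
  (* H meets every connected component of G - v *)
  (forall x, x != v -> exists2 y, y \in VH & connect (del_vertex e v) x y) ->
  (* k level-disjoint partitions of H rooted in v *)
  (forall j, level_partition VH eH (P j) /\ rooted_in v (P j)) ->
  level_disjoint_family P ->
  exists Q : 'I_k -> seq {set T},
    [/\ (forall j, level_partition [set: T] e (Q j) /\ rooted_in v (Q j)),
        level_disjoint_family Q
      & (forall j i, nth set0 (Q j) i :&: VH = nth set0 (P j) i)].
Proof.
move=> [se ie] _ _ sub vH meet PP PD.
have inv0 : inv e v VH P VH P.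
  split=> //.
  - move=> j; have [lp rt] := PP j; split=> //.
    case: lp => D U N; split=> // i hi; apply: subset_trans (N i hi) _.
    apply/subsetP=> z; rewrite !inE => /existsP [w /andP [wA ew]].
    apply/existsP; exists w; rewrite wA /=.
    by case/and3P: (sub _ _ ew).
  - move=> j i; apply/setIidPl/subsetP=> z zi.
    by apply/(lp_mem _ (PP j).1); exists i.
suff [Q [_ H1 H2 H3]] : exists Q, inv e v VH P [set: T] Q by exists Q; split.
suff grow : forall n W Q, #|~: W| = n -> inv e v VH P W Q -> exists Q, inv e v VH P [set: T] Q.
  exact: grow _ _ _ erefl inv0.
move=> n; elim: n => [|n IH] W Q hc iW.
  exists Q; suff <- : W = [set: T] by [].
  apply/setP=> z; rewrite inE; apply/negPn; rewrite -in_setC.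
  by move/eqP: hc; rewrite cards_eq0 => /eqP ->; rewrite in_set0.
have [x xW] : exists x, x \in ~: W.
  by apply/set0Pn; rewrite -cards_eq0 hc.
have xv : x != v.
  by apply/eqP=> xv; move: xW; rewrite xv in_setC; case: iW => sVW _ _ _; rewrite (subsetP sVW).
have [y0 y0H cxy] := meet x xv.
have y0W : y0 \in W by case: iW => sVW _ _ _; apply: (subsetP sVW).
have [a [b [aW bW rab]]] : exists a b, [/\ a \notin W, b \in W & del_vertex e v a b].
  case: (boolP [exists a, exists b, [&& a \notin W, b \in W & del_vertex e v a b]]).
    by case/existsP=> a /existsP [b /and3P [h1 h2 h3]]; exists a, b.
  move=> /negP nex; exfalso.
  have cl : closed (del_vertex e v) (mem W).
    move=> p q rpq; apply/idP/idP => h.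
      apply/negPn/negP=> nq; apply: nex; apply/existsP; exists q; apply/existsP; exists p.
      by rewrite nq h /= /del_vertex /= se; case/and3P: rpq => -> -> ->.
    apply/negPn/negP=> np; apply: nex; apply/existsP; exists p; apply/existsP; exists q.
    by rewrite np h.
  have := closed_connect cl cxy; rewrite /= y0W; move: xW; rewrite in_setC => /negbTE -> //.


case/and3P: rab => eab av bv.
have eba : e b a by rewrite se.
have [Q' iQ'] := step se aW bW bv eba iW.
apply: (IH (a |: W) Q') => //.
move: hc.
rewrite (cardsD1 a (~: W)) in_setC aW add1n => -[<-].
by rewrite setCU setIC -setDE.
Qed.
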